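(* Let $(S,E,f)$ be a reduced and closed observation table for $U$ and $D$ as defined below, and suppose the marking of $\mathcal{T}_{S,f}$ fails. Then there are $s,t\in S$, $z,w\in\Sigma^*$ with $\delta_f^*(\epsilon,sz)=t$ and $\delta_f^*(\epsilon,tw)=s$, and nonempty $x,y\in\Sigma^+$ with $x^\omega,y^\omega\in E$, $s\in\mathrm{Inf}_{\mathcal{T}_{S,f}}(sx^\omega)$ and $t\in\mathrm{Inf}_{\mathcal{T}_{S,f}}(ty^\omega)$, such that $f(s,x^\omega)=\text{yes}$ and $f(t,y^\omega)=\text{no}$.
   Context: $\Sigma$ is a finite alphabet, $U\subseteq\Sigma^\omega$ recognizable by a weak deterministic Büchi automaton, $D\subseteq\Sigma^\omega$ regular with trivial right-congruence (for all $w\in\Sigma^*,\alpha$: $\alpha\in D\iff w\alpha\in D$). An observation table $(S,E,f)$ consists of a prefix-closed finite $S\subseteq\Sigma^*$, a suffix-closed finite set $E$ of ultimately periodic words with $E\cap D=\emptyset$, and $f:(S\cup S\Sigma)\times E\to\{\text{yes},\text{no}\}$ with $f(s,\alpha)=\text{yes}$ iff $s\alpha\in U$; $f_s(\alpha)=f(s,\alpha)$. Reduced: $f_s\neq f_t$ for distinct $s,t\in S$; closed: every $s\in S\Sigma$ has $t\in S$ with $f_s=f_t$. $\mathcal{T}_{S,f}=(\Sigma,S,\delta_f,\epsilon)$ with $\delta_f(s,\sigma)$ the unique $t\in S$ with $f_{s\sigma}=f_t$; $\delta_f^*$ is its extension to words; $\mathrm{Inf}_{\mathcal{T}_{S,f}}(\beta)$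 is the set of states visited infinitely often by the run of $\beta$ from $\epsilon$. Marking: for each $\alpha\in S\cdot E$, every state in $\mathrm{Inf}_{\mathcal{T}_{S,f}}(\alpha)$ is marked ''yes'' if $\alpha\in U$ and ''no'' if $\alpha\notin U$. The marking fails iff there are states $s,t$ (possibly equal) in the same maximal strongly connected component of $\mathcal{T}_{S,f}$ such that $s$ is marked ''yes'' and $t$ is marked ''no''. *)

(* Defs.v *)
From mathcomp Require Import all_boot.
From Stdlib Require List.

Set Implicit Arguments.
Unset Strict Implicit.
Unset Printing Implicit Defensive.

Section Defs.
Variable Sigma : finType.

Definition word := nat -> Sigma.

Definition catw (w : seq Sigma) (a : word) : word :=
  fun n => if n < size w then nth (a 0) w n else a (n - size w).

(* (a :: x)^omega : the omega-power of the nonempty finite word a :: x *)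
Definition omega1 (a : Sigma) (x : seq Sigma) : word :=
  fun n => nth a (a :: x) (n %% (size x).+1).

Definition wsuffix (a : word) (k : nat) : word := fun n => a (k + n).

Definition ult_periodic (a : word) : Prop :=
  exists (u : seq Sigma) (b : Sigma) (v : seq Sigma), a =1 catw u (omega1 b v).

Definition wprefix (a : word) (n : nat) : seq Sigma := [seq a i | i <- iota 0 n].

Record dba := DBA {
  dst : finType;
  dinit : dst;
  dtrans : dst -> Sigma -> dst;
  dacc : pred dst }.

Fixpoint drun (A : dba) (a : word) (n : nat) : dst A :=
  match n with
  | 0 => dinit A
  | n.+1 => dtrans (drun A a n) (a n)
  end.

Definition dba_accepts (A : dba) (a : word) : Prop :=
  forall N, exists2 n, N <= n & dacc (drun A a n).

Definition dreach (A : dba) (p q : dst A) : Prop :=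
  exists w : seq Sigma, foldl (@dtrans A) p w = q.

Definition weak_dba (A : dba) : Prop :=
  forall p q : dst A, dreach p q -> dreach q p -> dacc p = dacc q.

Definition WDBA_recognizable (U : word -> Prop) : Prop :=
  exists A : dba, weak_dba A /\ forall a, U a <-> dba_accepts A a.

Record nba := NBA {
  nst : finType;
  ninit : pred nst;
  ntrans : nst -> Sigma -> nst -> bool;
  nacc : pred nst }.

Definition nba_accepts (B : nba) (a : word) : Prop :=
  exists r : nat -> nst B,
    [/\ @ninit B (r 0), (forall n, @ntrans B (r n) (a n) (r n.+1))
      & forall N, exists2 n, N <= n & @nacc B (r n)].

Definition omega_regular (D : word -> Prop) : Prop :=
  exists B : nba, forall a, D a <-> nba_accepts B a.

Definition trivial_right_congruence (D : word -> Prop) : Prop :=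
  forall (w : seq Sigma) (a : word), D a <-> D (catw w a).

(* S : finite set of finite words, E : finite set of infinite words,
   f : the table (a boolean function; only its values on (S u S.Sigma) x E
   matter), yes = true, no = false. *)

Definition prefix_closed (S : seq (seq Sigma)) : Prop :=
  forall s, s \in S -> forall n, take n s \in S.

Definition suffix_closed (E : list word) : Prop :=
  forall a, List.In a E -> forall k, List.In (wsuffix a k) E.

Definition observation_table (U D : word -> Prop) (S : seq (seq Sigma))
  (E : list word) (f : seq Sigma -> word -> bool) : Prop :=
  [/\ prefix_closed S,
      suffix_closed E,
      (forall a, List.In a E -> ult_periodic a),
      (forall a, List.In a E -> ~ D a)
    & (forall s a, (s \in S \/ exists2 s', s' \in S & exists c, s = rcons s' c) ->
         List.In a E -> (f s a = true <-> U (catw s a)))].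

Definition rowEq (E : list word) (f : seq Sigma -> word -> bool) (s t : seq Sigma) : bool :=
  all (fun a => f s a == f t a) E.

Definition reduced (S : seq (seq Sigma)) (E : list word) f : Prop :=
  forall s t, s \in S -> t \in S -> s != t -> ~~ rowEq E f s t.

Definition closed_table (S : seq (seq Sigma)) (E : list word) f : Prop :=
  forall s, s \in S -> forall c : Sigma, exists2 t, t \in S & rowEq E f (rcons s c) t.

(* transition function of T_{S,f}: the (unique, when reduced and closed)
   t in S with f_{s c} = f_t *)
Definition delta (S : seq (seq Sigma)) (E : list word) f (s : seq Sigma) (c : Sigma)
  : seq Sigma :=
  nth [::] S (find (rowEq E f (rcons s c)) S).

Definition deltaS S E f (s : seq Sigma) (w : seq Sigma) : seq Sigma :=
  foldl (delta S E f) s w.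

Definition InfT S E f (b : word) (q : seq Sigma) : Prop :=
  forall N, exists2 n, N <= n & deltaS S E f [::] (wprefix b n) = q.

Definition marked_yes (U : word -> Prop) S E f (q : seq Sigma) : Prop :=
  exists u a, [/\ u \in S, List.In a E, U (catw u a) & InfT S E f (catw u a) q].

Definition marked_no (U : word -> Prop) S E f (q : seq Sigma) : Prop :=
  exists u a, [/\ u \in S, List.In a E, ~ U (catw u a) & InfT S E f (catw u a) q].

Definition same_scc S E f (s t : seq Sigma) : Prop :=
  (exists z, deltaS S E f s z = t) /\ (exists w, deltaS S E f t w = s).

Definition marking_fails (U : word -> Prop) S E f : Prop :=
  exists s t, [/\ s \in S, t \in S, same_scc S E f s t,
                  marked_yes U S E f s & marked_no U S E f t].

End Defs.

(* Main.v *)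
Require Import Defs.
From mathcomp Require Import all_boot.
From Stdlib Require List.
From Stdlib Require Import FunctionalExtensionality.
From mathcomp Require Import zify.
Set Implicit Arguments. Unset Strict Implicit.

Definition run (Sigma : finType) S E f (u : seq Sigma) (al : word Sigma) k :=
  deltaS S E f u (wprefix al k).

Lemma wprefixS (Sigma : finType) (al : word Sigma) k :
  wprefix al k.+1 = rcons (wprefix al k) (al k).
Proof. by rewrite /wprefix -addn1 iotaD map_cat /= cats1 add0n. Qed.

Lemma runS (Sigma : finType) S E f (u : seq Sigma) al k :
  run S E f u al k.+1 = delta S E f (run S E f u al k) (al k).
Proof. by rewrite /run /deltaS wprefixS -cats1 foldl_cat. Qed.

Lemma wprefix_catw (Sigma : finType) (u : seq Sigma) al k :
  wprefix (catw u al) (size u + k) = u ++ wprefix al k.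
Proof.
rewrite /wprefix iotaD map_cat; congr (_ ++ _).
  rewrite -[RHS](mkseq_nth (al 0) u) /mkseq; apply/eq_in_map => i.
  by rewrite mem_iota add0n /catw => /andP[_ ->].
have -> : iota (size u) k = map (addn (size u)) (iota 0 k) by rewrite -iotaDl addn0.
rewrite -map_comp; apply: eq_map => i /=.
by rewrite /catw ltnNge leq_addr /= addKn.
Qed.

Lemma delta_in (Sigma : finType) S E f (r : seq Sigma) c :
  closed_table S E f -> r \in S -> delta S E f r c \in S.
Proof.
move=> Hc Hr; case: (Hc r Hr c) => t Ht Hrow.
rewrite /delta; apply: mem_nth; rewrite -has_find; apply/hasP; by exists t.
Qed.

Lemma delta_row (Sigma : finType) S E f (r : seq Sigma) c :
  closed_table S E f -> r \in S -> rowEq E f (rcons r c) (delta S E f r c).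
Proof.
move=> Hc Hr; case: (Hc r Hr c) => t Ht Hrow.
rewrite /delta; apply: (nth_find [::]); apply/hasP; by exists t.
Qed.

Lemma deltaS_self (Sigma : finType) S E f (s : seq Sigma) :
  prefix_closed S -> reduced S E f -> closed_table S E f ->
  s \in S -> deltaS S E f [::] s = s.
Proof.
move=> Hp Hr Hc; elim/last_ind: s => [//|s c IH] Hs.
have Hs' : s \in S by have := Hp _ Hs (size s); rewrite -cats1 take_size_cat.
rewrite /deltaS -cats1 foldl_cat -/(deltaS _ _ _ _ s) IH //= cats1.
have Hd := delta_in c Hc Hs'; have Hrow := delta_row c Hc Hs'.
apply/eqP; apply/negPn/negP => Hne.
by have /negP := Hr _ _ Hs Hd (introN eqP (nesym (elimN eqP Hne))).
Qed.

Lemma catw_shift (Sigma : finType) (r : seq Sigma) (al : word Sigma) k :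
  catw r (wsuffix al k) = catw (rcons r (al k)) (wsuffix al k.+1).
Proof.
apply: functional_extensionality => n; rewrite /catw size_rcons nth_rcons /wsuffix.
case: (ltngtP n (size r)) => H.
- by rewrite ltnS ltnW //; apply: set_nth_default.
- rewrite ltnS leqNgt H /=; congr al; lia.
- by rewrite H ltnS leqnn subnn addn0.
Qed.

Lemma all_In (T : Type) (p : pred T) s x : all p s -> List.In x s -> p x.
Proof. by elim: s => //= y s IH /andP[Hy Hs] [<-|/IH]; auto. Qed.

Lemma tbl_invariant (Sigma : finType) U D S E f (u : seq Sigma) al :
  observation_table U D S E f -> closed_table S E f ->
  u \in S -> List.In al E -> forall k,
  run S E f u al k \in S /\ (U (catw u al) <-> U (catw (run S E f u al k) (wsuffix al k))).
Proof.
move=> [Hp Hs Hu Hd Hf] Hc Hu0 Ha; elim=> [|k [Hin IH]].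
  split=> //; have -> : wsuffix al 0 = al by apply: functional_extensionality => n; rewrite /wsuffix add0n.
rewrite runS; split; first exact: delta_in.
have HE : List.In (wsuffix al k.+1) E by apply: Hs.
rewrite IH catw_shift.
have Hrow := delta_row (al k) Hc Hin.
rewrite -(Hf _ _ _ HE); last by right; exists (run S E f u al k) => //; exists (al k).
rewrite -(Hf _ _ _ HE); last by left; apply: delta_in.
move: (all_In Hrow HE) => /eqP ->.
exact: iff_refl.
Qed.

Lemma deltaS_cat (Sigma : finType) S E f (r s1 s2 : seq Sigma) :
  deltaS S E f r (s1 ++ s2) = deltaS S E f (deltaS S E f r s1) s2.
Proof. exact: foldl_cat. Qed.

Lemma run_add (Sigma : finType) S E f (u : seq Sigma) al m t :
  run S E f u al (m + t) = run S E f (run S E f u al m) (wsuffix al m) t.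
Proof.
elim: t => [|t IH]; first by rewrite addn0.
by rewrite addnS !runS IH.
Qed.

Lemma per_step (Sigma : finType) (al : word Sigma) v b y :
  al =1 catw v (omega1 b y) ->
  forall n k, size v <= n -> al (n + k * (size y).+1) = al n.
Proof.
move=> Hal n k Hn; elim: k => [|k IH]; first by rewrite mul0n addn0.
have -> : n + k.+1 * (size y).+1 = (n + k * (size y).+1) + (size y).+1.
  by rewrite mulSn; lia.
rewrite -IH.
set m := n + k * (size y).+1.
have Hm : size v <= m by rewrite /m; lia.
have Hm2 : size v <= m + (size y).+1 by lia.
rewrite !Hal /catw ltnNge Hm2 /= ltnNge Hm /=.
rewrite /omega1; congr nth.
have -> : m + (size y).+1 - size v = (m - size v) + (size y).+1 by lia.
by rewrite modnDr.
Qed.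

Lemma key_lemma (Sigma : finType) U D S E f (u : seq Sigma) al q :
  observation_table U D S E f -> prefix_closed S -> reduced S E f -> closed_table S E f ->
  u \in S -> List.In al E -> InfT S E f (catw u al) q ->
  exists a x, [/\ List.In (omega1 a x) E, InfT S E f (catw q (omega1 a x)) q, q \in S
                & (f q (omega1 a x) = true <-> U (catw u al))].
Proof.
move=> Hot Hp Hr Hc Hu Ha Hinf.
have Hot' := Hot; case: Hot' => [_ Hs Hup _ Hf].
have [v [b [y Hal]]] := Hup _ Ha.
set p := (size y).+1; set L := size v.
have Hper := per_step Hal.
have Hinv := @tbl_invariant _ U D S E f u al Hot Hc Hu Ha.
set g := fun j => run S E f u al (L + j * p).
set sq := [seq g j | j <- iota 0 (size S).+1].
have Hnu : ~~ uniq sq.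
  apply/negP => Hun.
  have := uniq_leq_size Hun.
  have Hsub : {subset sq <= S}.
    by move=> z /mapP [j _ ->]; rewrite /g; case: (Hinv (L + j * p)).
  by move/(_ S Hsub); rewrite size_map size_iota ltnn.
have /(uniqPn [::]) [i [j [Hij Hj Heq]]] := Hnu.
rewrite size_map size_iota in Hj.
rewrite !(nth_map 0%N) ?size_iota ?(ltn_trans Hij) // !nth_iota ?(ltn_trans Hij) //
  !add0n /g in Heq.
set n1 := L + i * p.
set Q := (j - i) * p.
have HQpos : 0 < Q by rewrite /Q muln_gt0 subn_gt0 Hij.
have HperQ : forall n k, L <= n -> al (n + k * Q) = al n.
  by move=> n k Hn; rewrite /Q mulnA; apply: Hper.
have Hn1Q : n1 + Q = L + j * p.
  by rewrite /n1 /Q -addnA -mulnDl subnKC // ltnW.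
have Hrp : forall t, run S E f u al (n1 + t + Q) = run S E f u al (n1 + t).
  elim=> [|t IH]; first by rewrite addn0 Hn1Q.
  rewrite addnS addSn !runS IH; congr delta.
  by have := HperQ (n1 + t) 1%N; rewrite mul1n => ->; rewrite // /n1 -addnA leq_addr.
have Hrk : forall m k, n1 <= m -> run S E f u al (m + k * Q) = run S E f u al m.
  move=> m k Hm; elim: k => [|k IH]; first by rewrite mul0n addn0.
  rewrite mulSn addnCA addnC.
  have -> : m + k * Q = n1 + (m + k * Q - n1) by lia.
  by rewrite Hrp -IH; congr run; lia.
have [n Hn Hq] := Hinf (size u + n1).
have Hnd : n = size u + (n - size u) by lia.
rewrite Hnd wprefix_catw deltaS_cat (deltaS_self Hp Hr Hc Hu) in Hq.
set m := n - size u in Hq Hnd.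
have Hm : n1 <= m by rewrite /m; lia.
have HLm : L <= m by move: Hm; rewrite /n1; lia.
case HQ : Q HQpos => [//|Q'] _.
set a := al m; set x := [seq al (m + k) | k <- iota 1 Q'].
have Hax : a :: x = [seq al (m + k) | k <- iota 0 Q] by rewrite HQ /= addn0.
have Hsx : (size x).+1 = Q by rewrite size_map size_iota HQ.
have Hom : omega1 a x = wsuffix al m.
  apply: functional_extensionality => k; rewrite /omega1 Hax Hsx /wsuffix.
  have HkQ : k %% Q < Q by rewrite ltn_pmod // HQ.
  rewrite (nth_map 0%N) ?size_iota // nth_iota // add0n.
  rewrite {2}(divn_eq k Q) [k %/ Q * Q + _]addnC addnA HperQ //.
  lia.
have Hmq : run S E f u al m = q := Hq.
have HqS : q \in S by rewrite -Hmq; case: (Hinv m).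
have HE : List.In (wsuffix al m) E by apply: Hs.
exists a, x; rewrite Hom; split => //.
  move=> N; exists (size q + N * Q); first by rewrite HQ mulnS; lia.
  rewrite wprefix_catw deltaS_cat (deltaS_self Hp Hr Hc HqS).
  change (run S E f q (wsuffix al m) (N * Q) = q).
  by rewrite -{1}Hmq -run_add Hrk.
have [_ H1] := Hinv m; rewrite Hmq in H1.
exact: (iff_trans (Hf q _ (or_introl HqS) HE) (iff_sym H1)).
Qed.

Theorem lemma7 (Sigma : finType) (U D : word Sigma -> Prop)
  (S : seq (seq Sigma)) (E : list (word Sigma))
  (f : seq Sigma -> word Sigma -> bool) :
  WDBA_recognizable U ->
  omega_regular D ->
  trivial_right_congruence D ->
  observation_table U D S E f ->
  reduced S E f ->
  closed_table S E f ->
  marking_fails U S E f ->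
  exists (s t : seq Sigma) (z w : seq Sigma)
         (a : Sigma) (x : seq Sigma) (b : Sigma) (y : seq Sigma),
    [/\ s \in S /\ t \in S,
        deltaS S E f [::] (s ++ z) = t /\ deltaS S E f [::] (t ++ w) = s,
        List.In (omega1 a x) E /\ List.In (omega1 b y) E,
        InfT S E f (catw s (omega1 a x)) s /\ InfT S E f (catw t (omega1 b y)) t
      & f s (omega1 a x) = true /\ f t (omega1 b y) = false].
Proof.
move=> _ _ _ Hot Hr Hc [s [t [Hs Ht [[z Hz] [w Hw]] [u [al [Hu Ha HU Hinf]]]
  [u' [al' [Hu' Ha' HU' Hinf']]]]]].
have Hp : prefix_closed S by case: Hot.
have [a [x [Hin1 Hi1 _ Hf1]]] := key_lemma Hot Hp Hr Hc Hu Ha Hinf.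
have [b [y [Hin2 Hi2 _ Hf2]]] := key_lemma Hot Hp Hr Hc Hu' Ha' Hinf'.
exists s, t, z, w, a, x, b, y; split => //.
- by rewrite !deltaS_cat !(deltaS_self Hp Hr Hc) //.
split; first exact: (proj2 Hf1 HU).
by apply/negP => /(proj1 Hf2).
Qed.
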